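(* Every unary FA-presentable quasi-order $(X,\le)$ decomposes as a finite disjoint union of trivial quasi-orders, countably infinite ascending chains, countably infinite descending chains, countably infinite anti-chains, and countably infinite strongly connected components; that is, $X$ can be partitioned into finitely many subsets, each of which, with the induced quasi-order, is either a one-element quasi-order, or a countably infinite set $\{x_1,x_2,\dots\}$ with $x_i\le x_j$ iff $i\le j$ (ascending chain), or one with $x_i\le x_j$ iff $i\ge j$ (descending chain), or a countably infinite set in which $x\le y$ only if $x=y$ (anti-chain), or a countably infinite set in which $x\le y$ for all $x,y$ (strongly connected component).
   Context: A quasi-order is a reflexive transitive binary relation. A structure $(X,\le)$ is unary FA-presentable if there exist a regular language $L\subseteq a^*$ over a one-letter alphabet and a surjection $\phi:L\to X$ such that both $\{(u,v)\in L^2: u\phi=v\phi\}$ and $\{(u,v)\in L^2:u\phi\le v\phi\}$ are regular relations, i.e. the corresponding sets of words $\mathrm{conv}(u,v)$ over $\{a,\$\}^2$ (reading $u$ and $v$ in parallel, padding the shorter with $\$$) are regular languages. *)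

(* Defs.v *)
From mathcomp Require Import all_boot.
Set Implicit Arguments. Unset Strict Implicit. Unset Printing Implicit Defensive.

Definition regular (A : finType) (P : seq A -> Prop) : Prop :=
  exists (Q : finType) (q0 : Q) (d : Q -> A -> Q) (F : pred Q),
    forall w : seq A, P w <-> F (foldl d q0 w).

Definition unary_word (n : nat) : seq unit := nseq n tt.

(* Two-track alphabet {a,$}^2 is [bool * bool] (true = a, false = $).
   conv(a^m, a^n): length max(m,n), position i carries (i<m ? a : $, i<n ? a : $). *)
Definition conv (m n : nat) : seq (bool * bool) :=
  mkseq (fun i => (i < m, i < n)) (maxn m n).

Definition unary_lang (L : nat -> Prop) : seq unit -> Prop :=
  fun w => exists n, L n /\ w = unary_word n.

Definition conv_lang (L : nat -> Prop) (R : nat -> nat -> Prop)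
  : seq (bool * bool) -> Prop :=
  fun w => exists m n, L m /\ L n /\ R m n /\ w = conv m n.

Definition unary_FA_presentable (X : Type) (le : X -> X -> Prop) : Prop :=
  exists (L : nat -> Prop) (phi : nat -> X),
    regular (unary_lang L) /\
    (forall x : X, exists n, L n /\ phi n = x) /\
    regular (conv_lang L (fun m n => phi m = phi n)) /\
    regular (conv_lang L (fun m n => le (phi m) (phi n))).

Definition quasi_order (X : Type) (le : X -> X -> Prop) : Prop :=
  (forall x, le x x) /\ (forall x y z, le x y -> le y z -> le x z).

Definition enumerates (X : Type) (P : X -> Prop) (f : nat -> X) : Prop :=
  (forall i j, f i = f j -> i = j) /\ (forall y, P y <-> exists i, f i = y).

Definition trivial_part (X : Type) (le : X -> X -> Prop) (P : X -> Prop) :=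
  exists x, forall y, P y <-> y = x.

Definition asc_chain_part (X : Type) (le : X -> X -> Prop) (P : X -> Prop) :=
  exists f, enumerates P f /\ forall i j, le (f i) (f j) <-> i <= j.

Definition desc_chain_part (X : Type) (le : X -> X -> Prop) (P : X -> Prop) :=
  exists f, enumerates P f /\ forall i j, le (f i) (f j) <-> j <= i.

Definition antichain_part (X : Type) (le : X -> X -> Prop) (P : X -> Prop) :=
  (exists f, enumerates P f) /\ forall x y, P x -> P y -> le x y -> x = y.

Definition scc_part (X : Type) (le : X -> X -> Prop) (P : X -> Prop) :=
  (exists f, enumerates P f) /\ forall x y, P x -> P y -> le x y.

Definition admissible_part (X : Type) (le : X -> X -> Prop) (P : X -> Prop) :=
  trivial_part le P \/ asc_chain_part le P \/ desc_chain_part le P \/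
  antichain_part le P \/ scc_part le P.

(* Main.v *)
From Stdlib Require Import Classical.
Require Import Defs.
From mathcomp Require Import all_boot zify.
Set Implicit Arguments. Unset Strict Implicit.


Lemma pigeon_iter (Q : finType) (f : Q -> Q) (q : Q) :
  exists i j, i < j <= #|Q| /\ iter i f q = iter j f q.
Proof.
apply: NNPP => H.
have inj : injective (fun i : 'I_(#|Q|.+1) => iter i f q).
  move=> a b E; apply: ord_inj; apply: NNPP => ne.
  case: (ltngtP a b) => lt.
  - apply: H; exists a, b; split => //; apply/andP; split => //; rewrite -ltnS; exact: ltn_ord.
  - apply: H; exists b, a; split => //; apply/andP; split => //; rewrite -ltnS; exact: ltn_ord.
  - by apply: ne.
have := @leq_card _ _ _ inj; rewrite card_ord; lia.
Qed.

Lemma iter_period (Q : finType) (f : Q -> Q) (q : Q) N k :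
  #|Q| <= N -> #|Q| <= k -> iter (k + N`!) f q = iter k f q.
Proof.
move=> hN hk; have [i [j [hij E]]] := @pigeon_iter Q f q.
have step : forall m, i <= m -> iter (m + (j - i)) f q = iter m f q.
  move=> m hm.
  have -> : m + (j - i) = (m - i) + j by lia.
  by rewrite iterD -E -iterD; congr iter; lia.
have : (j - i) %| N`! by apply: dvdn_fact; lia.
case/dvdnP => c ->.
elim: c => [|c IH]; first by rewrite mul0n addn0.
have -> : k + c.+1 * (j - i) = (k + c * (j - i)) + (j - i) by rewrite mulSn; lia.
rewrite step; [exact: IH|lia].
Qed.

Lemma foldl_nseq (A : Type) (S : Type) (d : S -> A -> S) (x : A) n q :
  foldl d q (nseq n x) = iter n (fun s => d s x) q.
Proof. by elim: n q => [|n IH] q //; rewrite iterSr -IH. Qed.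

Lemma conv_split m n :
  conv m n = nseq (minn m n) (true,true) ++ nseq (m - n) (true,false)
             ++ nseq (n - m) (false,true).
Proof.
apply: (eq_from_nth (x0 := (false,false))).
  rewrite /conv size_mkseq !size_cat !size_nseq; lia.
move=> i; rewrite /conv size_mkseq => hi; rewrite nth_mkseq //.
rewrite !nth_cat !size_nseq !nth_nseq.
by repeat case: ifP => ?; f_equal; lia.
Qed.

Lemma conv_inj m n m' n' : conv m n = conv m' n' -> m = m' /\ n = n'.
Proof.
move=> E.
have c1 : forall a b, count (fun p : bool * bool => p.1) (conv a b) = a.
  move=> a b; rewrite conv_split !count_cat !count_nseq /=; lia.
have c2 : forall a b, count (fun p : bool * bool => p.2) (conv a b) = b.
  move=> a b; rewrite conv_split !count_cat !count_nseq /=; lia.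
by split; [rewrite -(c1 m n) E c1 | rewrite -(c2 m n) E c2].
Qed.

Definition inv3 (S : nat -> nat -> Prop) N P :=
  (forall m n, N <= minn m n -> S (m+P) (n+P) <-> S m n) /\
  (forall m n, n+N <= m -> S (m+P) n <-> S m n) /\
  (forall m n, m+N <= n -> S m (n+P) <-> S m n).

Lemma conv_inv3 (L : nat -> Prop) (R : nat -> nat -> Prop) :
  regular (conv_lang L R) ->
  exists N0, forall N, N0 <= N -> inv3 (fun m n => L m /\ L n /\ R m n) N N`!.
Proof.
case=> Q [q0 [d [F hF]]]; exists #|Q| => N hN.
pose g1 := fun s => d s (true,true).
pose g2 := fun s => d s (true,false).
pose g3 := fun s => d s (false,true).
have hS : forall m n, (L m /\ L n /\ R m n) <->
    F (iter (n - m) g3 (iter (m - n) g2 (iter (minn m n) g1 q0))).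
  move=> m n.
  have -> : iter (n - m) g3 (iter (m - n) g2 (iter (minn m n) g1 q0))
            = foldl d q0 (conv m n).
    by rewrite conv_split !foldl_cat !foldl_nseq.
  rewrite -hF; split.
  - by move=> [hm [hn hr]]; exists m, n.
  - by move=> [m' [n' [hm [hn [hr /conv_inj [-> ->]]]]]].
split; [|split] => m n h; rewrite !hS.
- have -> : n + N`! - (m + N`!) = n - m by lia.
  have -> : m + N`! - (n + N`!) = m - n by lia.
  have -> : minn (m + N`!) (n + N`!) = minn m n + N`! by lia.
  by rewrite iter_period //; lia.
- have -> : n - (m + N`!) = n - m by lia.
  have -> : m + N`! - n = m - n + N`! by lia.
  have -> : minn (m + N`!) n = minn m n by lia.
  by rewrite iter_period //; lia.
- have -> : n + N`! - m = n - m + N`! by lia.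
  have -> : m - (n + N`!) = m - n by lia.
  have -> : minn m (n + N`!) = minn m n by lia.
  by rewrite iter_period //; lia.
Qed.

Lemma unary_period (L : nat -> Prop) :
  regular (unary_lang L) ->
  exists N0, forall N, N0 <= N -> forall n, N <= n -> (L (n + N`!) <-> L n).
Proof.
case=> Q [q0 [d [F hF]]]; exists #|Q| => N hN n hn.
have hL : forall n, L n <-> F (iter n (fun s => d s tt) q0).
  move=> k; rewrite -foldl_nseq -hF; split.
  - by move=> h; exists k.
  - move=> [k' [h E]]; have := congr1 size E; rewrite /unary_word !size_nseq.
    by move=> ->.
by rewrite !hL iter_period //; lia.
Qed.

Lemma compact (X : Type) (A : (X -> Prop) -> Prop) k (Q : nat -> X -> Prop) :
  (forall j, j < k -> (exists x, Q j x) -> A (Q j)) ->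
  exists k' (g : nat -> nat), (forall i, i < k' -> g i < k) /\
    (forall i i', i < k' -> i' < k' -> g i = g i' -> i = i') /\
    (forall i, i < k' -> A (Q (g i))) /\
    (forall j, j < k -> (exists x, Q j x) -> exists i, i < k' /\ g i = j).
Proof.
elim: k => [|k IH] hA.
  by exists 0, id; split => //; split => //; split.
have [k' [g [g1 [g2 [g3 g4]]]]] : exists k' (g : nat -> nat), (forall i, i < k' -> g i < k) /\
    (forall i i', i < k' -> i' < k' -> g i = g i' -> i = i') /\
    (forall i, i < k' -> A (Q (g i))) /\
    (forall j, j < k -> (exists x, Q j x) -> exists i, i < k' /\ g i = j).
  by apply: IH => j hj; apply: hA; lia.
case: (classic (exists x, Q k x)) => hne.
- exists k'.+1, (fun i => if i == k' then k else g i); split; [|split; [|split]].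
  + move=> i hi; case: eqP => e //; have := g1 i; lia.
  + move=> i i' hi hi'; case: eqP => e1; case: eqP => e2; try lia.
    * by move=> e; have := g1 i' ltac:(lia); lia.
    * by move=> e; have := g1 i ltac:(lia); lia.
    * by apply: g2; lia.
  + move=> i hi; case: eqP => e; first by apply: hA.
    by apply: g3; lia.
  + move=> j hj hx; case: (ltnP j k) => hjk.
    * have [i [hi <-]] := g4 j hjk hx; exists i; split; first lia.
      by case: eqP => // e; lia.
    * exists k'; split; first lia; rewrite eqxx; lia.
- exists k', g; split; [|split; [|split]] => //.
  + move=> i hi; have := g1 i hi; lia.
  + move=> j hj hx; case: (ltnP j k) => hjk; first exact: g4.
    have e : j = k by lia. by subst j.
Qed.

Lemma prog_inv (S : nat -> nat -> Prop) N P b :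
  inv3 S N P -> N <= b -> N <= P ->
  (forall i j, i < j -> (S (b + i*P) (b + j*P) <-> S b (b + P))) /\
  (forall i j, i < j -> (S (b + j*P) (b + i*P) <-> S (b + P) b)).
Proof.
move=> [I1 [I2 I3]] hb hP.
have base1 : forall d, S b (b + d.+1 * P) <-> S b (b + P).
  elim=> [|d IH]; first by rewrite mul1n.
  have -> : b + d.+2 * P = (b + d.+1 * P) + P by rewrite (mulSn d.+1); lia.
  rewrite I3 //; rewrite mulSn; lia.
have base2 : forall d, S (b + d.+1 * P) b <-> S (b + P) b.
  elim=> [|d IH]; first by rewrite mul1n.
  have -> : b + d.+2 * P = (b + d.+1 * P) + P by rewrite (mulSn d.+1); lia.
  rewrite I2 //; rewrite mulSn; lia.
split => i j hij; have [d ->] : exists d, j = i + d.+1 by exists (j - i - 1); lia.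
all: clear hij.
- elim: i => [|i IH]; first by rewrite mul0n addn0 add0n.
  have -> : b + i.+1 * P = (b + i * P) + P by rewrite mulSn; lia.
  have -> : b + (i.+1 + d.+1) * P = (b + (i + d.+1) * P) + P
     by rewrite addSn mulSn; lia.
  rewrite I1 //; rewrite mulnDl; lia.
- elim: i => [|i IH]; first by rewrite mul0n addn0 add0n.
  have -> : b + i.+1 * P = (b + i * P) + P by rewrite mulSn; lia.
  have -> : b + (i.+1 + d.+1) * P = (b + (i + d.+1) * P) + P
     by rewrite addSn mulSn; lia.
  rewrite I1 //; rewrite mulnDl; lia.
Qed.

Theorem corollary5p9 (X : Type) (le : X -> X -> Prop) :
  quasi_order le -> unary_FA_presentable le ->
  exists (k : nat) (part : nat -> X -> Prop),
    (forall x, exists i, i < k /\ part i x) /\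
    (forall i j x, i < k -> j < k -> part i x -> part j x -> i = j) /\
    (forall i, i < k -> admissible_part le (part i)).
Proof.
move=> [hrefl _] [L [phi [hL [hsurj [hE hLe]]]]].
have [N1 HN1] := unary_period hL.
have [N2 HN2] := conv_inv3 hE.
have [N3 HN3] := conv_inv3 hLe.
pose N := N1 + N2 + N3 + 1.
have hLp : forall n, N <= n -> L (n + N`!) <-> L n by apply: HN1; lia.
have hinvE := HN2 N ltac:(lia).
have hinvO := HN3 N ltac:(lia).
move: hinvE hinvO hLp.
have : N <= N`! by apply: fact_geq.
have : 0 < N`! by apply: fact_gt0.
have : 0 < N by lia.
move: N`! => P; move: N => N; clear HN1 HN2 HN3 N1 N2 N3.
move=> N0 P0 NP hinvE hinvO hLp.
have [E1 [E2 E3]] := hinvE.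
pose T0 := 2 * N + P.
pose M n := L n /\ forall m, m < n -> L m -> phi m <> phi n.
have hLi : forall n i, N <= n -> (L (n + i * P) <-> L n).
  move=> n i hn; elim: i => [|i IH]; first by rewrite mul0n addn0.
  have -> : n + i.+1 * P = (n + i * P) + P by rewrite mulSn; lia.
  by rewrite hLp ?IH //; lia.
have hMstep : forall n, T0 <= n -> (M (n + P) <-> M n).
  move=> n hn; split.
  - move=> [hl hm]; split; first by rewrite -hLp //; lia.
    move=> m hmn hlm he.
    case: (leqP N m) => hNm.
    + have [hl1 [_ he1]] : L (m + P) /\ L (n + P) /\ phi (m + P) = phi (n + P).
        by apply/E1; [lia | split; [|split]] => //; rewrite -hLp //; lia.
      by apply: (hm (m + P)) => //; lia.
    + have [_ [_ he1]] : L m /\ L (n + P) /\ phi m = phi (n + P).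
        by apply/E3; [lia | split; [|split]] => //; rewrite -hLp //; lia.
      by apply: (hm m) => //; lia.
  - move=> [hl hm]; split; first by rewrite hLp //; lia.
    move=> m hmn hlm he.
    case: (leqP (N + P) m) => hNm.
    + have em : m = (m - P) + P by lia.
      rewrite em in hlm he.
      have [hl1 [_ he1]] : L (m - P) /\ L n /\ phi (m - P) = phi n.
        by apply/E1; [lia | split; [|split]] => //; rewrite hLp //; lia.
      by apply: (hm (m - P)) => //; lia.
    + have [_ [_ he1]] : L m /\ L n /\ phi m = phi n.
        by apply/E3; [lia | split; [|split]] => //; rewrite hLp //; lia.
      by apply: (hm m) => //; lia.
have hMi : forall n i, T0 <= n -> (M (n + i * P) <-> M n).
  move=> n i hn; elim: i => [|i IH]; first by rewrite mul0n addn0.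
  have -> : n + i.+1 * P = (n + i * P) + P by rewrite mulSn; lia.
  by rewrite hMstep ?IH //; lia.
have Minj : forall a b, M a -> M b -> phi a = phi b -> a = b.
  move=> a b [ha hma] [hb hmb] e; case: (ltngtP a b) => // h.
  - by case: (hmb a).
  - by case: (hma b).
have Mex : forall n, L n -> exists m, M m /\ phi m = phi n.
  elim/ltn_ind => n IH hn.
  case: (classic (exists m, m < n /\ L m /\ phi m = phi n)).
  - move=> [m [hmn [hm e]]]; have [m' [h1 h2]] := IH m hmn hm.
    by exists m'; rewrite h2 e.
  - move=> hne; exists n; split => //; split => // m hmn hm e.
    by apply: hne; exists m.
pose Qp j x := exists i, (j < T0 -> i = 0) /\ M (j + i * P) /\ x = phi (j + i * P).
have Qdisj : forall j j' x, j < T0 + P -> j' < T0 + P -> Qp j x -> Qp j' x -> j = j'.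
  move=> j j' x hj hj' [i [hi [hm ->]]] [i' [hi' [hm' e]]].
  have := Minj _ _ hm hm' e => {}e.
  case: (ltnP j T0) => h1; case: (ltnP j' T0) => h2.
  - rewrite (hi h1) (hi' h2) !mul0n !addn0 in e; exact: e.
  - rewrite (hi h1) mul0n addn0 in e; lia.
  - rewrite (hi' h2) mul0n addn0 in e; lia.
  - have e2 : i * P + (j - T0) = i' * P + (j' - T0) by lia.
    have := congr1 (modn^~ P) e2; rewrite /= !modnMDl !modn_small; lia.
have Qadm : forall j, j < T0 + P -> (exists x, Qp j x) -> admissible_part le (Qp j).
  move=> j hj [x0 [i0 [hi0 [hm0 _]]]].
  case: (ltnP j T0) => hjT.
  - left; exists (phi j) => y; split.
    + by move=> [i [hi [_ ->]]]; rewrite (hi hjT) mul0n addn0.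
    + move=> ->; exists 0; rewrite mul0n addn0; split => //.
      by rewrite (hi0 hjT) mul0n addn0 in hm0.
  - have hMj : forall i, M (j + i * P) by move=> i; rewrite hMi //; rewrite hMi in hm0.
    pose f i := phi (j + i * P).
    have Henum : enumerates (Qp j) f.
      split.
      + move=> a b e; have := Minj _ _ (hMj a) (hMj b) e.
        move/eqP; rewrite eqn_add2l eqn_mul2r; case/orP => /eqP; lia.
      + move=> y; split.
        * by move=> [i [_ [_ ->]]]; exists i.
        * by move=> [i <-]; exists i; split => //; lia.
    pose SL m n := L m /\ L n /\ le (phi m) (phi n).
    have [Pr1 Pr2] := prog_inv (b:=j) hinvO ltac:(lia) NP.
    have Hle : forall i i', le (f i) (f i') <->
        (i < i' /\ SL j (j + P)) \/ i = i' \/ (i' < i /\ SL (j + P) j).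
      move=> i i'.
      have hsl : le (f i) (f i') <-> SL (j + i * P) (j + i' * P).
        by split; [move=> h; split; [|split] => //; apply: (proj1 (hMj _)) | case=> _ []].
      rewrite hsl /SL; case: (ltngtP i i') => h.
      + rewrite Pr1 //; split; [by left | case => [[h1 h2]|[h1|[h1 h2]]] //; lia].
      + rewrite Pr2 //; split; [by right; right | case => [[h1 h2]|[h1|[h1 h2]]] //; lia].
      + subst i'; split; [by right; left | move=> _; split; [|split];
          try apply: (proj1 (hMj _)); apply: hrefl].
    case: (classic (SL j (j + P))) => ha; case: (classic (SL (j + P) j)) => hb.
    + right; right; right; right; split; first by exists f.
      move=> x y [i [_ [_ ->]]] [i' [_ [_ ->]]].
      apply/(Hle i i'); case: (ltngtP i i') => h; [left; split => // | right; right; split => // | right; left => //].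
    + right; left; exists f; split => // i i'; rewrite Hle.
      split; [case => [[]|[]]; try lia; tauto | move=> h].
      case: (ltngtP i i') => h'; [by left | lia | by right; left].
    + right; right; left; exists f; split => // i i'; rewrite Hle.
      split; [case => [[]|[]]; try lia; tauto | move=> h].
      case: (ltngtP i i') => h'; [lia | by right; right | by right; left].
    + right; right; right; left; split; first by exists f.
      move=> x y [i [_ [_ ->]]] [i' [_ [_ ->]]].
      move/(Hle i i'); case => [[_ h2]|[->|[_ h2]]] //.
have [k' [g [g1 [g2 [g3 g4]]]]] := compact Qadm.
exists k', (fun i => Qp (g i)); split; [|split] => //.
- move=> x; have [n [hn <-]] := hsurj x.
  have [m [hm <-]] := Mex n hn.
  have [j [i [hj [hi e]]]] : exists j i, j < T0 + P /\ (j < T0 -> i = 0) /\ m = j + i * P.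
    case: (ltnP m T0) => h.
    + by exists m, 0; split; [lia | split => //; rewrite mul0n addn0].
    + exists (T0 + (m - T0) %% P), ((m - T0) %/ P); split; first by have := ltn_pmod (m - T0) P0; lia.
      split; first lia.
      have := divn_eq (m - T0) P; lia.
  have hQ : Qp j (phi m) by exists i; split => //; split; [rewrite -e | rewrite e].
  have [i' [hi' ge]] := g4 j hj (ex_intro _ _ hQ).
  by exists i'; split => //; rewrite ge.
- move=> i i' x hi hi' h h'; apply: g2 => //.
  exact: Qdisj (g1 _ hi) (g1 _ hi') h h'.
Qed.
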